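(* For every integer $n\ge2$, $$\int_0^{1-\frac{\log n}{n}}F_n(w)\,dw\le(2+\sqrt2)\,n.$$
   Context: For $w>0$ and integer $n\ge1$ let $a_n(w)=\sum_{j=0}^n w^j$, $b_n(w)=\sum_{j=1}^n jw^j$, $c_n(w)=\sum_{j=0}^n j^2w^j$, and $$F_n(w)=\frac{1}{2\sqrt{w}}\sqrt{\frac{c_n(w)}{a_n(w)}}\sqrt{\frac{a_n(w)c_n(w)-b_n(w)^2}{w\,a_n(w)^2}}.$$ $\log$ is the natural logarithm. *)

(* Defs.v *)
From Stdlib Require Import Reals Lra.
From Coquelicot Require Import Coquelicot.
Open Scope R_scope.

Definition a_n (n : nat) (w : R) : R := sum_f_R0 (fun j => w ^ j) n.
Definition b_n (n : nat) (w : R) : R := sum_f_R0 (fun j => INR j * w ^ j) n.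
Definition c_n (n : nat) (w : R) : R := sum_f_R0 (fun j => INR j ^ 2 * w ^ j) n.

Definition F_n (n : nat) (w : R) : R :=
  / (2 * sqrt w) * sqrt (c_n n w / a_n n w)
  * sqrt ((a_n n w * c_n n w - b_n n w ^ 2) / (w * a_n n w ^ 2)).

(* Main.v *)
Require Import Defs.
From Stdlib Require Import Reals Lra Lia Psatz.
From Coquelicot Require Import Coquelicot.
Open Scope R_scope.

Definition cp (n : nat) (w : R) : R := sum_f_R0 (fun j => INR j ^ 2 * w ^ pred j) n.
Definition bp (n : nat) (w : R) : R := sum_f_R0 (fun j => INR j * w ^ pred j) n.
Definition G (n : nat) (w : R) : R :=
  / 2 * sqrt (cp n w * / a_n n w)
  * sqrt ((a_n n w * cp n w + - (w * bp n w ^ 2)) * / (a_n n w ^ 2)).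

Lemma c_eq n w : c_n n w = w * cp n w.
Proof. induction n; unfold c_n, cp in *; cbn [sum_f_R0 pred]. simpl; ring. rewrite IHn. simpl. ring. Qed.

Lemma b_eq n w : b_n n w = w * bp n w.
Proof. induction n; unfold b_n, bp in *; cbn [sum_f_R0 pred]. simpl; ring. rewrite IHn. simpl. ring. Qed.

Lemma a_id n w : a_n n w - 1 = w * a_n n w - w ^ (S n).
Proof. induction n; unfold a_n in *; simpl in *. ring. lra. Qed.

Lemma c_id n w : c_n n w * (1 - w) ^ 2 =
  2 * (a_n n w - 1) - w + w ^ (S n) * (INR n ^ 2 * w - INR n ^ 2 - 2 * INR n + 1).
Proof.
  induction n.
  - unfold c_n, a_n; simpl. ring.
  - unfold c_n, a_n in *. cbn [sum_f_R0].
    rewrite Rmult_plus_distr_r, IHn. rewrite S_INR. simpl. ring.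
Qed.

Lemma a_ge1 n w : 0 <= w -> 1 <= a_n n w.
Proof.
  intros Hw; induction n; unfold a_n in *; simpl in *. lra.
  assert (0 <= w ^ n) by (apply pow_le; lra). nra.
Qed.

Lemma c_ge0 n w : 0 <= w -> 0 <= c_n n w.
Proof.
  intros Hw; induction n; unfold c_n in *; cbn [sum_f_R0] in *. simpl; lra.
  apply Rplus_le_le_0_compat; auto. apply Rmult_le_pos; apply pow_le; [apply pos_INR | lra].
Qed.

Lemma pow_le1 w n : 0 <= w <= 1 -> w ^ n <= 1.
Proof. intros H; induction n; simpl. lra. assert (0 <= w ^ n) by (apply pow_le; lra). nra. Qed.

Lemma c_bound n w : 0 < w < 1 -> c_n n w * (1 - w) ^ 2 <= 2 * w * a_n n w.
Proof.
  intros Hw. rewrite c_id. pose proof (a_id n w) as Ha.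
  assert (0 < w ^ n) by (apply pow_lt; lra).
  assert (w ^ n <= 1) by (apply pow_le1; lra).
  pose proof (pos_INR n).
  assert (INR n ^ 2 * w - INR n ^ 2 - 2 * INR n + 1 <= 1) by nra.
  set (K := INR n ^ 2 * w - INR n ^ 2 - 2 * INR n + 1) in *.
  assert (w * w ^ n * K <= w * w ^ n * 1).
  { apply Rmult_le_compat_l; [apply Rmult_le_pos; lra | lra]. }
  simpl in *. nra.
Qed.

Lemma F_bound n w : 0 < w < 1 -> F_n n w <= / (1 - w) ^ 2.
Proof.
  intros Hw. unfold F_n.
  set (a := a_n n w). set (b := b_n n w). set (c := c_n n w).
  assert (Ha : 1 <= a) by (apply a_ge1; lra).
  assert (Hc : 0 <= c) by (apply c_ge0; lra).
  assert (Hcb : c * (1 - w) ^ 2 <= 2 * w * a) by (apply c_bound; lra).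
  assert (Hsw : 0 < sqrt w) by (apply sqrt_lt_R0; lra).
  assert (H1 : sqrt ((a * c - b ^ 2) / (w * a ^ 2)) <= sqrt (c / a) * / sqrt w).
  { rewrite <- sqrt_inv, <- sqrt_mult_alt.
    2: { apply Rmult_le_pos; [lra | apply Rlt_le, Rinv_0_lt_compat; lra]. }
    apply sqrt_le_1_alt.
    replace (c / a * / w) with ((a * c) / (w * a ^ 2)) by (field; lra).
    unfold Rdiv. apply Rmult_le_compat_r.
    - apply Rlt_le, Rinv_0_lt_compat, Rmult_lt_0_compat; [lra | apply pow_lt; lra].
    - assert (0 <= b ^ 2) by (apply pow2_ge_0). lra. }
  assert (H2 : 0 <= / (2 * sqrt w) * sqrt (c / a)).
  { apply Rmult_le_pos. apply Rlt_le, Rinv_0_lt_compat; lra. apply sqrt_pos. }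
  eapply Rle_trans. apply Rmult_le_compat_l. exact H2. exact H1.
  replace (/ (2 * sqrt w) * sqrt (c / a) * (sqrt (c / a) * / sqrt w))
    with ((sqrt (c / a) * sqrt (c / a)) / (2 * (sqrt w * sqrt w))) by (field; lra).
  rewrite !sqrt_sqrt; [| lra | apply Rmult_le_pos; [lra | apply Rlt_le, Rinv_0_lt_compat; lra]].
  assert (0 < (1 - w) ^ 2) by (apply pow_lt; lra).
  apply (Rmult_le_reg_r ((1 - w) ^ 2 * (2 * w) * a)). apply Rmult_lt_0_compat; [nra | lra].
  replace (c / a / (2 * w) * ((1 - w) ^ 2 * (2 * w) * a)) with (c * (1 - w) ^ 2) by (field; lra).
  replace (/ (1 - w) ^ 2 * ((1 - w) ^ 2 * (2 * w) * a)) with (2 * w * a) by (field; lra).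
  exact Hcb.
Qed.

Lemma F_eq_G n w : 0 < w -> G n w = F_n n w.
Proof.
  intros Hw. unfold F_n, G. rewrite c_eq, b_eq.
  assert (Ha : 1 <= a_n n w) by (apply a_ge1; lra).
  assert (Hsw : 0 < sqrt w) by (apply sqrt_lt_R0; lra).
  replace (w * cp n w / a_n n w) with (w * (cp n w * / a_n n w)) by (field; lra).
  rewrite (sqrt_mult_alt w) by lra.
  replace ((a_n n w * (w * cp n w) - (w * bp n w) ^ 2) / (w * a_n n w ^ 2))
    with ((a_n n w * cp n w + - (w * bp n w ^ 2)) * / a_n n w ^ 2) by (field; lra).
  field. lra.
Qed.

Lemma cont_pow k x : continuous (fun w : R => w ^ k) x.
Proof.
  induction k; simpl. apply continuous_const.
  apply (continuous_mult (fun w : R => w) (fun w => w ^ k)); auto. apply continuous_id.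
Qed.

Lemma cont_sum (f : nat -> R -> R) n x :
  (forall j, continuous (f j) x) -> continuous (fun w => sum_f_R0 (fun j => f j w) n) x.
Proof.
  intros H; induction n; simpl. apply H.
  apply (continuous_plus (fun w => sum_f_R0 (fun j => f j w) n) (f (S n))); auto.
Qed.

Lemma cont_a n x : continuous (a_n n) x.
Proof. apply (cont_sum (fun j w => w ^ j)). intros; apply cont_pow. Qed.
Lemma cont_cp n x : continuous (cp n) x.
Proof. apply (cont_sum (fun j w => INR j ^ 2 * w ^ pred j)). intros.
  apply (continuous_mult (fun _ => INR j ^ 2) (fun w => w ^ pred j)). apply continuous_const. apply cont_pow. Qed.
Lemma cont_bp n x : continuous (bp n) x.
Proof. apply (cont_sum (fun j w => INR j * w ^ pred j)). intros.
  apply (continuous_mult (fun _ => INR j) (fun w => w ^ pred j)). apply continuous_const. apply cont_pow. Qed.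

Lemma cont_G n x : 0 <= x -> continuous (G n) x.
Proof.
  intros Hx. assert (Ha : 1 <= a_n n x) by (apply a_ge1; lra).
  unfold G.
  apply (continuous_mult (fun w => / 2 * sqrt (cp n w * / a_n n w))
     (fun w => sqrt ((a_n n w * cp n w + - (w * bp n w ^ 2)) * / (a_n n w ^ 2)))).
  - apply (continuous_mult (fun _ => / 2) (fun w => sqrt (cp n w * / a_n n w))).
    apply continuous_const.
    apply continuous_sqrt_comp.
    apply (continuous_mult (cp n) (fun w => / a_n n w)). apply cont_cp.
    apply continuous_Rinv_comp. apply cont_a. lra.
  - apply continuous_sqrt_comp.
    apply (continuous_mult (fun w => a_n n w * cp n w + - (w * bp n w ^ 2)) (fun w => / (a_n n w ^ 2))).
    + apply (continuous_plus (fun w => a_n n w * cp n w) (fun w => - (w * bp n w ^ 2))).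
      * apply (continuous_mult (a_n n) (cp n)). apply cont_a. apply cont_cp.
      * apply (continuous_opp (fun w => w * bp n w ^ 2)).
        apply (continuous_mult (fun w => w) (fun w => bp n w ^ 2)). apply continuous_id.
        apply (continuous_comp (bp n) (fun y => y ^ 2)). apply cont_bp. apply cont_pow.
    + apply (continuous_Rinv_comp (fun w => a_n n w ^ 2)).
      apply (continuous_comp (a_n n) (fun y => y ^ 2)). apply cont_a. apply cont_pow.
      apply pow_nonzero. lra.
Qed.

Theorem lemma3p6 (n : nat) (hn : (2 <= n)%nat) :
  ex_RInt (F_n n) 0 (1 - ln (INR n) / INR n) /\
  RInt (F_n n) 0 (1 - ln (INR n) / INR n) <= (2 + sqrt 2) * INR n.
Proof.
  assert (Hn : 2 <= INR n) by (replace 2 with (INR 2) by (simpl; lra); apply le_INR; lia).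
  assert (Hl2 : / 2 < ln (INR n)).
  { eapply Rlt_le_trans. apply ln_lt_2. apply ln_le; lra. }
  assert (Hln : ln (INR n) <= INR n - 1).
  { pose proof (exp_ineq1_le (ln (INR n))). rewrite exp_ln in H by lra. lra. }
  set (X := 1 - ln (INR n) / INR n).
  assert (HX1 : 1 - X = ln (INR n) / INR n) by (unfold X; ring).
  assert (HXpos : 0 < 1 - X) by (rewrite HX1; apply Rdiv_lt_0_compat; lra).
  assert (HX0 : 0 <= X).
  { unfold X. apply (Rmult_le_reg_r (INR n)). lra.
    replace ((1 - ln (INR n) / INR n) * INR n) with (INR n - ln (INR n)) by (field; lra). lra. }
  assert (HexF : ex_RInt (F_n n) 0 X).
  { apply (ex_RInt_ext (G n)).
    - intros x Hx. rewrite Rmin_left in Hx by lra. apply F_eq_G. lra.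
    - apply (ex_RInt_continuous (V:=R_CompleteNormedModule)). intros z Hz. rewrite Rmin_left in Hz by lra.
      apply cont_G. lra. }
  assert (Hg : is_RInt (fun w => / (1 - w) ^ 2) 0 X (minus (/ (1 - X)) (/ (1 - 0)))).
  { apply (is_RInt_derive (fun w => / (1 - w))).
    - intros x Hx. rewrite Rmin_left, Rmax_right in Hx by lra.
      auto_derive. lra. field. lra.
    - intros x Hx. rewrite Rmin_left, Rmax_right in Hx by lra.
      apply (ex_derive_continuous (K:=R_AbsRing) (V:=R_NormedModule)). auto_derive. replace ((1 + - x) * ((1 + - x) * 1)) with ((1 - x) ^ 2) by ring. apply pow_nonzero. lra. }
  split. exact HexF.
  eapply Rle_trans. apply (RInt_le _ (fun w => / (1 - w) ^ 2)); auto.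
  - eexists; exact Hg.
  - intros x Hx. apply F_bound. lra.
  - rewrite (is_RInt_unique _ _ _ _ Hg). unfold minus, plus, opp; simpl.
    rewrite HX1. replace (/ (ln (INR n) / INR n)) with (INR n / ln (INR n)) by (field; lra).
    assert (INR n / ln (INR n) <= 2 * INR n).
    { apply (Rmult_le_reg_r (ln (INR n))). lra.
      replace (INR n / ln (INR n) * ln (INR n)) with (INR n) by (field; lra). nra. }
    pose proof (sqrt_pos 2). nra.
Qed.
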